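(* For $s\ge1$ let $E(s,0)$ be the number of pairs $(U,W)$ of $p$-strings of length $s$ whose meander graph $\Gamma^1_{2s-1}$ has no pierced circle. Then $\frac{E(s,0)}{C_s^2}\to 0$ as $s\to\infty$.
   Context: A $p$-string of length $s$ is a correctly matched (balanced) string of $s$ left and $s$ right parentheses; there are $C_s=\frac{1}{s+1}\binom{2s}{s}$ of them. Given two $p$-strings $U$ (upper) and $W$ (lower) of length $s$, the meander graph $\Gamma^1_{2s-1}$ is obtained by marking points $0,1,\dots,2s$ on the $x$-axis, taking the segment $[0,2s]$, joining points $a,b$ by an upper semicircle for each matched pair of $U$ at positions $a<b$ (positions $1,\dots,2s$), and joining points $a-1,b-1$ by a lower semicircle for each matched pair of $W$ at positions $a<b$; the vertices are the points $1,\dots,2s-1$. A pierced circle at position $i$ ($1\le i\le 2s-2$) is present if vertices $i$ and $i+1$ are joined both by an upper and by a lower semicircle. *)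

(* Defs.v *)
From mathcomp Require Import all_boot all_order all_algebra.
Set Implicit Arguments. Unset Strict Implicit. Unset Printing Implicit Defensive.
Import Order.TTheory GRing.Theory Num.Theory.

(* A parenthesis string is a seq bool: true = '(' , false = ')'.
   Positions are 1-based in the paper: position a is [nth false w a.-1]. *)

Definition depth (w : seq bool) (k : nat) : int :=
  (count id (take k w))%:Z - (count negb (take k w))%:Z.

Definition pstring (s : nat) (w : seq bool) : bool :=
  [&& size w == 2 * s, depth w (size w) == 0%R &
      [forall k : 'I_(size w).+1, (0 <= depth w k)%R]].

Definition matched (w : seq bool) (a b : nat) : bool :=
  [&& 0 < a, a < b, b <= size w, nth false w a.-1, ~~ nth false w b.-1,
      depth w b == depth w a.-1 &
      [forall k : 'I_b, (a <= k) ==> (depth w a.-1 < depth w k)%R]].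

(* pierced circle at position i (1 <= i <= 2s-2) of the meander graph of
   (U, W): vertices i, i+1 joined by an upper semicircle (U has the pair
   (i, i+1)) and by a lower semicircle (W has the pair (i+1, i+2), which is
   drawn between points i and i+1). *)
Definition pierced (s : nat) (U W : seq bool) (i : nat) : bool :=
  [&& 1 <= i, i <= 2 * s - 2, matched U i i.+1 & matched W i.+1 i.+2].

Definition no_pierced (s : nat) (U W : seq bool) : bool :=
  [forall i : 'I_(2 * s), ~~ pierced s U W i].

Definition E0 (s : nat) : nat :=
  #|[set p : (2 * s).-tuple bool * (2 * s).-tuple bool |
      [&& pstring s p.1, pstring s p.2 & no_pierced s p.1 p.2]]|.

Definition catalan (s : nat) : rat := ('C(2 * s, s))%:R / (s.+1)%:R.

(* Main.v *)
Require Import Defs.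
From mathcomp Require Import all_boot all_order all_algebra zify lra.
Import Order.TTheory GRing.Theory Num.Theory.

Lemma depthS (w : seq bool) k : k < size w ->
  depth w k.+1 = (depth w k + (if nth false w k then 1 else -1))%R.
Proof.
move=> hk; rewrite /depth (take_nth false hk) -cats1 !count_cat /=.
case: (nth false w k) => /=; rewrite ?addn0 ?addn1 ?PoszD; lia.
Qed.

Lemma matched_peak (w : seq bool) a : 0 < a -> a < size w ->
  nth false w a.-1 -> ~~ nth false w a -> matched w a a.+1.
Proof.
move=> a0 aw h1 h2.
have e1 : depth w a = (depth w a.-1 + 1)%R.
  by rewrite -{1}(prednK a0) depthS ?h1 // (prednK a0); lia.
have e2 : depth w a.+1 = (depth w a - 1)%R.
  by rewrite depthS // (negbTE h2).
rewrite /matched a0 ltnSn aw h1 /= h2 /= e2 e1 addrK eqxx /=.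
apply/forallP => k; apply/implyP => hk.
have -> : nat_of_ord k = a by have := ltn_ord k; lia.
by rewrite e1 ltrDl.
Qed.

Definition bad (u w : seq bool) : bool :=
  [&& nth false u 0, ~~ nth false u 1, nth false w 1 & ~~ nth false w 2].

Fixpoint good (m : nat) (u w : seq bool) : bool :=
  if m is m'.+1 then ~~ bad u w && good m' (drop 3 u) (drop 3 w) else true.

Lemma good_of m : forall u w,
  (forall k, k < m -> ~~ bad (drop (3 * k) u) (drop (3 * k) w)) -> good m u w.
Proof.
elim: m => [//|m IH] u w H /=.
apply/andP; split; first by have := H 0 isT; rewrite muln0 !drop0.
apply: IH => k hk; rewrite !drop_drop.
by have := H k.+1 hk; rewrite (_ : 3 * k.+1 = 3 * k + 3) //; lia.
Qed.

Lemma np_good s (U W : seq bool) m : size U = 2 * s -> size W = 2 * s ->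
  3 * m <= 2 * s -> no_pierced s U W -> good m U W.
Proof.
move=> hU hW hm /forallP hp; apply: good_of => k hk.
have hi : 3 * k + 1 < 2 * s by lia.
have := hp (Ordinal hi); rewrite /pierced /=.
apply: contra => hb; move: hb; rewrite /bad !nth_drop !addn0.
case/and4P => b1 b2 b3 b4.
apply/and4P; split; first by lia. by lia.
  apply: matched_peak; first by lia. by lia.
    by rewrite (_ : (3 * k + 1).-1 = 3 * k) //; lia.
  by [].
apply: matched_peak; first by lia. by lia.
  by [].
by rewrite (_ : (3 * k + 1).+1 = 3 * k + 2) //; lia.
Qed.

Definition cnt n (P : seq bool -> seq bool -> bool) :=
  #|[set p : n.-tuple bool * n.-tuple bool | P (val p.1) (val p.2)]|.

Lemma cnt_mono n (P P' : seq bool -> seq bool -> bool) :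
  (forall u w, P u w -> P' u w) -> cnt n P <= cnt n P'.
Proof.
move=> H; apply: subset_leq_card; apply/subsetP => p; rewrite !inE; exact: H.
Qed.

Lemma cnt_all n P : cnt n P <= 4 ^ n.
Proof.
apply: leq_trans (max_card _) _.
by rewrite card_prod card_tuple card_bool -expnMn.
Qed.

Definition tk n (t : n.+3.-tuple bool) : 3.-tuple bool :=
  insubd (nseq_tuple 3 false) (take 3 (val t)).
Definition dr n (t : n.+3.-tuple bool) : n.-tuple bool :=
  insubd (nseq_tuple n false) (drop 3 (val t)).

Arguments tk {n}. Arguments dr {n}.
Lemma tkE n t : val (@tk n t) = take 3 (val t).
Proof. by rewrite val_insubd size_takel ?size_tuple // eqxx. Qed.
Lemma drE n t : val (@dr n t) = drop 3 (val t).
Proof. by rewrite val_insubd size_drop size_tuple (_ : n.+3 - 3 = n) ?eqxx //; lia. Qed.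

Lemma cnt_step n P Q :
  cnt n.+3 (fun u w => Q (take 3 u) (take 3 w) && P (drop 3 u) (drop 3 w))
  <= cnt 3 Q * cnt n P.
Proof.
rewrite /cnt -cardsX.
set A := [set p : _ | _].
pose f (p : n.+3.-tuple bool * n.+3.-tuple bool) :=
  ((tk p.1, tk p.2), (dr p.1, dr p.2)).
rewrite -(card_in_imset (f := f)); last first.
  move=> [a b] [c d] _ _ [e1 e2 e3 e4].
  have ta : a = c.
    apply: val_inj; rewrite /= -(cat_take_drop 3 (val a)) -(cat_take_drop 3 (val c)).
    by rewrite -!tkE -!drE e1 e3.
  have tb : b = d.
    apply: val_inj; rewrite /= -(cat_take_drop 3 (val b)) -(cat_take_drop 3 (val d)).
    by rewrite -!tkE -!drE e2 e4.
  by rewrite ta tb.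
apply: subset_leq_card; apply/subsetP => x /imsetP [[a b]].
rewrite inE /= => /andP [h1 h2] ->.
by rewrite !inE /= !tkE !drE h1 h2.
Qed.

Lemma cnt_bad : cnt 3 (fun u w => ~~ bad u w) <= 63.
Proof.
pose x0 : 3.-tuple bool * 3.-tuple bool :=
  ([tuple true; false; false], [tuple false; true; false]).
have -> : 63 = #|[set~ x0]| by rewrite cardsC1 card_prod !card_tuple card_bool.
apply: subset_leq_card; apply/subsetP => p; rewrite !inE.
by apply: contra => /eqP ->.
Qed.

Lemma bad_take u w : bad u w = bad (take 3 u) (take 3 w).
Proof. by rewrite /bad !nth_take. Qed.

Lemma cnt_good m : forall n, 3 * m <= n -> cnt n (good m) <= 63 ^ m * 4 ^ (n - 3 * m).
Proof.
elim: m => [|m IH] n hn.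
  by rewrite muln0 subn0 mul1n; apply: cnt_all.
case: n hn => [|[|[|n]]] hn; try (exfalso; lia).
have h1 := cnt_step n (good m) (fun u w => ~~ bad u w).
have h0 : cnt n.+3 (good m.+1) <= cnt n.+3 (fun u w => ~~ bad (take 3 u) (take 3 w) && good m (drop 3 u) (drop 3 w)).
  by apply: cnt_mono => u w /= /andP [h2 h3]; rewrite -bad_take h2.
have h2 : cnt n (good m) <= 63 ^ m * 4 ^ (n - 3 * m) by apply: IH; lia.
have h3 := leq_mul cnt_bad h2.
rewrite (_ : n.+3 - 3 * m.+1 = n - 3 * m); last by lia.
rewrite expnS -mulnA; exact: leq_trans h0 (leq_trans h1 h3).
Qed.

Lemma binS2 s : s.+1 * 'C(2 * s.+1, s.+1) = 2 * (2 * s + 1) * 'C(2 * s, s).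
Proof.
have e1 := mul_bin_diag (2 * s.+1) s.
have e2 := mul_bin_diag (2 * s).+1 s.
have e3 : 'C((2 * s).+1, s.+1) = 'C((2 * s).+1, s).
  rewrite -bin_sub; last by lia.
  by rewrite (_ : (2 * s).+1 - s.+1 = s) //; lia.
rewrite (_ : (2 * s.+1).-1 = (2 * s).+1) in e1; last by lia.
rewrite /= e3 in e2.
rewrite -e1; move: e2; set x := binomial _ s; set y := binomial (2 * s) s => e2. nia.
Qed.

Lemma bin_lb s : 4 ^ s <= (2 * s + 1) * 'C(2 * s, s).
Proof.
elim: s => [|s IH]; first by rewrite muln0 bin0.
have e := binS2 s.
have hp : 0 < s.+1 by [].
rewrite -(leq_pmul2l hp) mulnCA e expnS.
move: IH; set c := 'C(2 * s, s); set a := 4 ^ s => IH.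
nia.
Qed.

Lemma bern q : 63 ^ q * (63 + q) <= 63 * 64 ^ q.
Proof.
elim: q => [|q IH]; first by [].
rewrite !expnS. move: IH; set a := 63 ^ q; set b := 64 ^ q => IH. nia.
Qed.

Lemma E0_le s m : 3 * m <= 2 * s -> E0 s <= cnt (2 * s) (good m).
Proof.
move=> hm; apply: subset_leq_card; apply/subsetP => p; rewrite !inE.
case/and3P => _ _ hp; apply: np_good hp => //; exact: size_tuple.
Qed.

Lemma nat_main K s : 15 * (K * (2 ^ 14 * 63 ^ 5) + 1) <= s ->
  K * E0 s * (s.+1) ^ 2 < 'C(2 * s, s) ^ 2.
Proof.
move=> hs.
set q := (2 * s) %/ 15.
have hq := divn_eq (2 * s) 15. have hr := ltn_pmod (2 * s) (isT : 0 < 15).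
rewrite -/q in hq.
set M := 63 ^ 5.
have M0 : 0 < M by rewrite expn_gt0.
have H1 : E0 s <= 63 ^ (5 * q) * 4 ^ (2 * s - 15 * q).
  have h : 3 * (5 * q) <= 2 * s by lia.
  have h2 := @E0_le s (5 * q) h. apply: leq_trans h2 _.
  rewrite (_ : 15 * q = 3 * (5 * q)); [exact: cnt_good | lia].
set a := 63 ^ (5 * q) in H1. set R := 4 ^ (2 * s - 15 * q) in H1.
set b := 64 ^ (5 * q).
have H3 : a * (q + 63) ^ 5 <= M * b.
  have := bern q; rewrite -(leq_exp2r _ _ (isT : 0 < 5)) !expnMn -!expnM.
  by rewrite /a /b /M addnC (mulnC q 5).
have H4 : K * 2 ^ 14 * M < q + 63.
  have : K * (2 ^ 14 * 63 ^ 5) < q + 63 by lia.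
  by rewrite mulnA.
have H5 : R * b = (4 ^ s) ^ 2.
  rewrite /R /b -(expnM 4 s 2) (_ : 64 = 4 ^ 3) // -(expnM 4 3) -expnD; congr (_ ^ _); lia.
have H6 := bin_lb s.
have H2 : s.+1 ^ 2 * (2 * s + 1) ^ 2 <= 2 ^ 14 * (q + 63) ^ 4.
  have h1 : s.+1 * (2 * s + 1) <= 2 ^ 7 * (q + 63) ^ 2 by nia.
  have := leq_mul h1 h1. nia.
set Q := q + 63 in H2 H3 H4.
set C := 'C(2 * s, s) in H6 *.
set E := E0 s in H1 *.
have a0 : 0 < a by rewrite expn_gt0.
have R0 : 0 < R by rewrite expn_gt0.
have G1 : K * 2 ^ 14 * Q ^ 4 * a < b.
  rewrite -(ltn_pmul2l M0).
  apply: leq_trans _ H3.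
  have Q0 : 0 < Q ^ 4 * a by rewrite muln_gt0 expn_gt0 a0 andbT addn_gt0 orbT.
  have := H4; rewrite -(ltn_pmul2r Q0) => h.
  move: h; rewrite (_ : Q ^ 5 = Q * Q ^ 4) ?expnS // => h. nia.
have G2 : K * E * (s.+1 ^ 2 * (2 * s + 1) ^ 2) < R * b.
  have h1 : K * E * (s.+1 ^ 2 * (2 * s + 1) ^ 2) <= K * (a * R) * (2 ^ 14 * Q ^ 4).
    by apply: leq_mul; [apply: leq_mul|].
  apply: leq_ltn_trans h1 _.
  have := G1; rewrite -(ltn_pmul2l R0) => h2.
  move: h2; nia.
have G3 : (4 ^ s) ^ 2 <= ((2 * s + 1) * C) ^ 2 by rewrite leq_exp2r.
have : K * E * s.+1 ^ 2 * (2 * s + 1) ^ 2 < C ^ 2 * (2 * s + 1) ^ 2.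
  rewrite H5 in G2; have G4 := leq_trans G2 G3; move: G4; rewrite expnMn; set x := s.+1 ^ 2; set y := (2 * s + 1) ^ 2; set z := C ^ 2; clearbody x y z; lia.
by rewrite ltn_pmul2r // expn_gt0 addn1.
Qed.

Theorem proposition4p3 :
  forall eps : rat, (0 < eps)%R ->
  exists N : nat, forall s : nat, (N <= s)%N ->
    ((E0 s)%:R / (catalan s ^+ 2) < eps)%R.
Proof.
move=> eps he.
set K := Num.Def.archi_bound eps^-1.
have hK : (eps^-1 < K%:R)%R by apply: archi_boundP; rewrite invr_ge0 ltW.
exists (15 * (K * (2 ^ 14 * 63 ^ 5) + 1)) => s hs.
have hn := @nat_main K s hs.
have c0 : (0 < ('C(2 * s, s))%:R :> rat)%R by rewrite ltr0n bin_gt0; lia.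
rewrite /catalan expr_div_n invf_div mulrA ltr_pdivrMr ?exprn_gt0 //.
move: hn; rewrite -(ltr_nat rat) !natrM !expr2.
have e1 : (eps * eps^-1 = 1)%R by rewrite mulfV // gt_eqF.
move: hK e1 c0; set c := (('C(2 * s, s))%:R : rat).
set k := (K%:R : rat); set t := ((s.+1)%:R : rat); set x := ((E0 s)%:R : rat).
have x0 : (0 <= x)%R by rewrite /x ler0n.
set i := (eps^-1)%R.
clearbody c k t x i => hK e1 c0 hn.
have y0 : (0 <= x * (t * t))%R by rewrite mulr_ge0 // -(expr2 t) sqr_ge0.
move: y0 hn; rewrite !mulrA; set y := (x * t * t)%R => y0.
rewrite -!mulrA -/y => hn.
have c2 : (0 < c * c)%R by rewrite mulr_gt0.
move: c2 hn; set d := (c * c)%R => c2 hn.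
have hn2 : (k * y < d)%R by move: hn; rewrite /y !mulrA.
clear hn; clearbody y d.
have h1 : (1 < eps * k)%R by rewrite -e1 (ltr_pM2l he).
have h2 : (eps * (k * y) < eps * d)%R by rewrite (ltr_pM2l he).
apply: le_lt_trans h2.
rewrite mulrA ler_peMl //; exact: ltW.
Qed.
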